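(* Let $\Phi_{\vec p}=\sum_{k,l}p_{kl}U_{kl}\otimes\overline{U}_{kl}$ be a Weyl channel lying in the simplex spanned by $\Phi_{X^k}=X^k\otimes\overline{X^k}$, $k=0,\dots,N-1$ (i.e. $p_{kl}=0$ whenever $l\neq0$), and let $T(\Phi_{\vec p})=\sum_{k}q_kX^k$ with $q_k=\sum_lp_{kl}$. Then the set of eigenvalues of the superoperator $\Phi_{\vec p}$ equals the spectrum of $T(\Phi_{\vec p})$; moreover the spectrum of $\Phi_{\vec p}$ is $N$-fold degenerate: its eigenvalues $\lambda_{mn}=\sum_{k,l}\omega^{ml-nk}p_{kl}$ satisfy $\lambda_{mn}=\xi_n$ for all $m$, where $\xi_n=\sum_k\omega^{-nk}q_k$, $n=0,\dots,N-1$, are the eigenvalues of $T(\Phi_{\vec p})$.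
   Context: Let $N\ge2$, $\omega=e^{2\pi i/N}$, $X|j\rangle=|j\oplus1\rangle$ (addition mod $N$), $Z=\mathrm{diag}(1,\omega,\dots,\omega^{N-1})$, Weyl unitaries $U_{kl}=X^kZ^l$, $k,l\in\{0,\dots,N-1\}$. Maps on $N\times N$ matrices are identified with superoperators ($N^2\times N^2$ matrices) acting on $|A\rangle\rangle=\sum A_{ij}|i\rangle|j\rangle$, so $\rho\mapsto K\rho K^\dagger$ corresponds to $K\otimes\overline{K}$. A Weyl channel is $\Phi_{\vec p}=\sum_{k,l}p_{kl}U_{kl}\otimes\overline{U}_{kl}$ with $(p_{kl})$ a probability vector. *)

(* Defs.v *)
From HB Require Import structures.
From mathcomp Require Import all_boot all_order all_algebra.
From mathcomp Require Import reals trigo.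
From mathcomp Require Import complex mxtens.

Set Implicit Arguments. Unset Strict Implicit. Unset Printing Implicit Defensive.
Import Order.TTheory GRing.Theory Num.Theory.
Local Open Scope ring_scope.
Local Open Scope complex_scope.

Section Weyl.
Variables (R : realType) (N : nat).
Local Notation C := R[i].

Definition omega : C := Complex (cos (2 * pi / N%:R)) (sin (2 * pi / N%:R)).

(* k-th power of a square matrix (mulmx iterated; works for any size N) *)
Definition mxpow (A : 'M[C]_N) (k : nat) : 'M[C]_N := iter k (mulmx A) 1%:M.

Definition Xmx : 'M[C]_N := \matrix_(i, j) ((val i == (val j + 1) %% N)%N)%:R.

Definition Zmx : 'M[C]_N := \matrix_(i, j) ((i == j)%:R * omega ^+ val i).

Definition Ukl (k l : 'I_N) : 'M[C]_N := mxpow Xmx k *m mxpow Zmx l.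

(* superoperator of rho |-> K rho K^dagger : K (x) conj(K),
   acting on |A>> = sum A_ij |i>|j> (index i*N+j, as in mxtens) *)
Definition superop (K : 'M[C]_N) : 'M[C]_(N * N) := K *t map_mx Num.conj K.

Definition weyl_channel (p : 'I_N -> 'I_N -> R) : 'M[C]_(N * N) :=
  \sum_(k < N) \sum_(l < N) (p k l)%:C *: superop (Ukl k l).

Definition qvec (p : 'I_N -> 'I_N -> R) (k : 'I_N) : R := \sum_(l < N) p k l.

Definition Tmap (p : 'I_N -> 'I_N -> R) : 'M[C]_N :=
  \sum_(k < N) (qvec p k)%:C *: mxpow Xmx k.

Definition lam (p : 'I_N -> 'I_N -> R) (m n : 'I_N) : C :=
  \sum_(k < N) \sum_(l < N)
     omega ^ ((val m * val l)%:Z - (val n * val k)%:Z) * (p k l)%:C.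

Definition xi (p : 'I_N -> 'I_N -> R) (n : 'I_N) : C :=
  \sum_(k < N) omega ^ (- (val n * val k)%:Z) * (qvec p k)%:C.

Definition prob_vec (p : 'I_N -> 'I_N -> R) : Prop :=
  (forall k l, 0 <= p k l) /\ \sum_(k < N) \sum_(l < N) p k l = 1.

End Weyl.

(* Main.v *)
Require Import Defs.
From HB Require Import structures.
From mathcomp Require Import all_boot all_order all_algebra.
From mathcomp Require Import reals trigo.
From mathcomp Require Import complex mxtens.
From mathcomp Require Import ring lra.
Import Order.TTheory GRing.Theory Num.Theory.
Local Open Scope ring_scope.

Lemma char_poly_sim {K : fieldType} {n} {F A D : 'M[K]_n} :
  F \in unitmx -> F *m A = D *m F -> char_poly A = char_poly D.
Proof.
move=> Fu e.
have h : map_mx polyC F *m char_poly_mx A = char_poly_mx D *m map_mx polyC F.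
  rewrite /char_poly_mx mulmxBr mulmxBl -map_mxM e map_mxM.
  by rewrite mul_mx_scalar mul_scalar_mx.
have := congr1 determinant h; rewrite !det_mulmx /char_poly mulrC.
have dF : \det (map_mx polyC F) != 0.
  by rewrite det_map_mx polyC_eq0 -unitfE -unitmxE.
by move/(mulIf dF).
Qed.

Section Fourier.
Variables (R : realType) (N : nat).
Local Notation C := R[i].
Hypothesis N0 : (0 < N)%N.
Variable nu : C.
Hypothesis nuN : nu ^+ N = 1.
Hypothesis nu_neq1 : forall d, (0 < d < N)%N -> nu ^+ d != 1.

Lemma nu_neq0 : nu != 0.
Proof. by apply/eqP=> e; move: nuN; rewrite e expr0n eqn0Ngt N0 /= => /eqP; rewrite eq_sym oner_eq0. Qed.

Lemma nu_mod a : nu ^+ (a %% N) = nu ^+ a.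
Proof. by rewrite {2}(divn_eq a N) exprD mulnC exprM nuN expr1n mul1r. Qed.

Lemma nu_inj (i j : nat) : (i < N)%N -> (j < N)%N -> nu ^+ i = nu ^+ j -> i = j.
Proof.
wlog lij : i j / (i <= j)%N.
  move=> W iN jN e; case: (leqP i j) => h; first exact: W.
  by apply/esym/W => //; apply: ltnW.
move=> iN jN e; apply/eqP; rewrite eqn_leq lij /=; rewrite leqNgt; apply/negP => ltij.
have : nu ^+ (j - i) != 1 by apply: nu_neq1; rewrite subn_gt0 ltij /=; apply: leq_ltn_trans (leq_subr _ _) jN.
rewrite -(subnKC lij) exprD in e.
have : nu ^+ i * nu ^+ (j - i) = nu ^+ i * 1 by rewrite -e mulr1.
move/(mulfI (expf_neq0 i nu_neq0)) => ->; by rewrite eqxx.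
Qed.

Lemma sum_root (z : C) : z ^+ N = 1 -> z != 1 -> \sum_(l < N) z ^+ l = 0.
Proof.
move=> zN z1; have := subrX1 z N; rewrite zN subrr => /esym /eqP.
by rewrite mulf_eq0 subr_eq0 (negbTE z1) /= => /eqP.
Qed.

Definition Fmx : 'M[C]_N := \matrix_(i, j) nu ^+ (i * j).
Definition Gmx : 'M[C]_N := \matrix_(i, j) (N%:R^-1 * (nu ^+ (i * j))^-1).

Lemma FG : Fmx *m Gmx = 1%:M.
Proof.
apply/matrixP => i j; rewrite !mxE.
under eq_bigr => l _ do rewrite !mxE mulrCA [(l * j)%N]mulnC !exprM -exprVn -exprMn.
rewrite -mulr_sumr.
case: (eqVneq i j) => [->|ij].
  rewrite mulfV ?expf_neq0 ?nu_neq0 //.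
  under eq_bigr do rewrite expr1n.
  by rewrite sumr_const card_ord mulVf // pnatr_eq0 -lt0n.
rewrite sum_root ?mulr0 //.
  by rewrite exprMn exprVn -!exprM mulnC exprM nuN expr1n mulnC exprM nuN expr1n invr1 mulr1.
apply/negP => /eqP e; move/eqP: ij; apply; apply: val_inj; apply: nu_inj; [exact: ltn_ord|exact: ltn_ord|].
by rewrite -[nu ^+ val j]mul1r -e mulrVK // unitfE expf_neq0 ?nu_neq0.
Qed.

Lemma F_unit : Fmx \in unitmx.
Proof. by case: (mulmx1_unit FG). Qed.


Definition Dmx : 'M[C]_N := diag_mx (\row_i nu ^+ i).

Lemma FX : Fmx *m Xmx R N = Dmx *m Fmx.
Proof.
apply/matrixP => i j; rewrite mul_diag_mx !mxE.
have jlt : ((j + 1) %% N < N)%N by rewrite ltn_mod.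
rewrite (bigD1 (Ordinal jlt)) //= big1 ?addr0.
  rewrite !mxE eqxx mulr1 mulnC exprM nu_mod -exprM -exprD.
  by rewrite mulnDl mul1n addnC mulnC.
move=> l /eqP ne; rewrite !mxE; case: eqP => [e|]; last by rewrite mulr0.
by case: ne; apply: val_inj.
Qed.

Lemma mxpowS (A : 'M[C]_N) k : mxpow A k.+1 = A *m mxpow A k.
Proof. by []. Qed.

Lemma FXk k : Fmx *m mxpow (Xmx R N) k = mxpow Dmx k *m Fmx.
Proof.
elim: k => [|k IH]; first by rewrite /mxpow /= mul1mx mulmx1.
by rewrite !mxpowS mulmxA FX -mulmxA IH mulmxA.
Qed.

Lemma mxpow_diag (d : 'rV[C]_N) k i j :
  mxpow (diag_mx d) k i j = (d 0 i) ^+ k *+ (i == j).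
Proof.
elim: k i j => [|k IH] i j; first by rewrite /mxpow /= mxE expr0.
by rewrite mxpowS mul_diag_mx mxE IH mulrnAr exprS.
Qed.

Lemma char_T (q : 'I_N -> C) :
  char_poly (\sum_(k < N) q k *: mxpow (Xmx R N) k)
  = \prod_(i < N) ('X - (\sum_(k < N) q k * nu ^+ (i * k))%:P).
Proof.
have FT : Fmx *m (\sum_(k < N) q k *: mxpow (Xmx R N) k)
          = (\sum_(k < N) q k *: mxpow Dmx k) *m Fmx.
  rewrite mulmx_sumr mulmx_suml; apply: eq_bigr => k _.
  by rewrite -scalemxAr FXk scalemxAl.
rewrite (char_poly_sim (F_unit) FT) char_poly_trig.
  apply: eq_bigr => i _; congr ('X - _%:P).
  rewrite summxE; apply: eq_bigr => k _.
  by rewrite mxE mxpow_diag mxE eqxx mulr1n exprM.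
apply/is_trig_mxP => i j lij; rewrite summxE big1 // => k _.
rewrite mxE mxpow_diag.
have -> : (i == j) = false by apply/negbTE; rewrite neq_ltn lij.
by rewrite mulr0n mulr0.
Qed.

Definition F2 : 'M[C]_(N * N) := Fmx *t Fmx.

Lemma F2_unit : F2 \in unitmx.
Proof. by apply: tensmx_unit; rewrite -?lt0n // F_unit. Qed.

Lemma char_Phi (q : 'I_N -> C) :
  char_poly (\sum_(k < N) q k *: (mxpow (Xmx R N) k *t mxpow (Xmx R N) k))
  = \prod_(a < N) \prod_(b < N) ('X - (\sum_(k < N) q k * nu ^+ ((a + b) * k))%:P).
Proof.
pose Del := \sum_(k < N) q k *: (mxpow Dmx k *t mxpow Dmx k).
have FT : F2 *m (\sum_(k < N) q k *: (mxpow (Xmx R N) k *t mxpow (Xmx R N) k))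
          = Del *m F2.
  rewrite mulmx_sumr mulmx_suml; apply: eq_bigr => k _.
  by rewrite -scalemxAr /F2 tensmx_mul FXk -tensmx_mul scalemxAl.
have DelE a b c e : Del (mxtens_index (a, b)) (mxtens_index (c, e))
    = \sum_(k < N) q k * ((nu ^+ a) ^+ k *+ (a == c) * ((nu ^+ b) ^+ k *+ (b == e))).
  rewrite /Del summxE; apply: eq_bigr => k _.
  by rewrite mxE tensmxE !mxpow_diag !mxE.
rewrite (char_poly_sim F2_unit FT) char_poly_trig.
  rewrite (reindex (@mxtens_index N N)) /=; last first.
    by exists (@mxtens_unindex N N) => x _; [apply: mxtens_indexK|apply: mxtens_unindexK].
  rewrite pair_big /=; apply: eq_big => // [[a b]] _ /=; congr ('X - _%:P).
  rewrite DelE; apply: eq_bigr => k _.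
  by rewrite !eqxx !mulr1n -!exprM mulnDl exprD mulnC [(b * k)%N]mulnC.
apply/is_trig_mxP => I J.
case: (mxtens_indexP I) => a b; case: (mxtens_indexP J) => c e lij.
have ne : (a, b) != (c, e).
  apply/eqP => h; move: lij; rewrite h ltnn //.
rewrite DelE big1 // => k _.
move: ne; rewrite xpair_eqE negb_and => /orP [] /negbTE ->.
  by rewrite mulr0n mul0r mulr0.
by rewrite mulr0n !mulr0.
Qed.

End Fourier.

Section Om.
Variables (R : realType) (N : nat).
Hypothesis N0 : (0 < N)%N.
Let th : R := 2 * pi / N%:R.

Lemma omegaX k : omega R N ^+ k = Complex (cos (k%:R * th)) (sin (k%:R * th)).
Proof.
elim: k => [|k IH]; first by rewrite expr0 mul0r cos0 sin0.
rewrite exprS IH /omega -/th.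
rewrite -addn1 natrD mulrDl mul1r cosD sinD.
by apply/eqP; rewrite eq_complex /=; apply/andP; split; apply/eqP; ring.
Qed.

Lemma omegaN : omega R N ^+ N = 1.
Proof.
rewrite omegaX /th mulrCA mulfV ?mulr1 ?pnatr_eq0 -?lt0n //.
by rewrite mulr_natl cos2pi sin2pi.

Qed.

Lemma omega_neq1 d : (0 < d < N)%N -> omega R N ^+ d != 1.
Proof.
case/andP => d0 dN; rewrite omegaX eq_complex /= negb_and; apply/orP; left.
have -> : d%:R * th = ((pi : R) * d%:R / N%:R) *+ 2.
  by rewrite /th -mulr_natl; field; rewrite pnatr_eq0 -lt0n.
rewrite cos_mulr2n cos2sin2.
have : 0 < sin ((pi : R) * d%:R / N%:R).
  apply: sin_gt0_pi; apply/andP; split.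
    by rewrite divr_gt0 ?mulr_gt0 ?pi_gt0 ?ltr0n.
  rewrite ltr_pdivrMr ?ltr0n // ltr_pM2l ?pi_gt0 // ltr_nat //.
move=> h; apply/eqP => e.
have : sin ((pi : R) * d%:R / N%:R) ^+ 2 = 0 by lra.
by move/eqP; rewrite sqrf_eq0 => /eqP z; move: h; rewrite z ltxx.
Qed.
End Om.

Lemma conj_Xpow (R : realType) (N : nat) k :
  map_mx (@Num.conj R[i]) (mxpow (Xmx R N) k) = mxpow (Xmx R N) k.
Proof.
elim: k => [|k IH].
  by apply/matrixP => i j; rewrite /mxpow /= !mxE; case: (i == j); rewrite /= ?conjC_nat ?conjC0.
rewrite mxpowS map_mxM IH; congr (_ *m _).
  apply/matrixP => i j; rewrite /mxpow /= !mxE; exact: rmorph_nat.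
Qed.

Theorem proposition3 (R : realType) (N : nat) (p : 'I_N -> 'I_N -> R) :
  (1 < N)%N ->
  prob_vec p ->
  (forall k l : 'I_N, (val l != 0)%N -> p k l = 0) ->
  [/\ (forall a : R[i], eigenvalue (weyl_channel p) a = eigenvalue (Tmap p) a),
      char_poly (weyl_channel p)
        = \prod_(m < N) \prod_(n < N) ('X - (lam p m n)%:P),
      char_poly (Tmap p) = \prod_(n < N) ('X - (xi p n)%:P)
    & forall m n : 'I_N, lam p m n = xi p n].
Proof.
case: N p => [|[|n]] // p _ _ p0.
set N := n.+2.
have N0 : (0 < N)%N by [].
pose nu : R[i] := (omega R N)^-1.
have nuN : nu ^+ N = 1 by rewrite /nu exprVn omegaN // invr1.
have nu1 : forall d, (0 < d < N)%N -> nu ^+ d != 1.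
  by move=> d hd; rewrite /nu exprVn invr_eq1 omega_neq1.
pose q k := ((qvec p k)%:C)%C.
have qE k : qvec p k = p k ord0.
  rewrite /qvec (bigD1 ord0) //= big1 ?addr0 // => l l0; apply: p0.
  by move: l0; apply: contra => /eqP h; apply/eqP/val_inj.
have xiE m : xi p m = \sum_(k < N) q k * nu ^+ (m * k).
  rewrite /xi; apply: eq_bigr => k _.
  by rewrite mulrC -invr_expz exprVn.
have lamE m m' : lam p m m' = xi p m'.
  rewrite /lam /xi; apply: eq_bigr => k _.
  rewrite (bigD1 ord0) //= big1 ?addr0 ?qE ?muln0 ?sub0r //.
  move=> l l0; rewrite p0 ?mulr0 //.
have weylE : weyl_channel p
    = \sum_(k < N) q k *: (mxpow (Xmx R N) k *t mxpow (Xmx R N) k).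
  rewrite /weyl_channel; apply: eq_bigr => k _.
  rewrite (bigD1 ord0) //= big1 ?addr0.
    by rewrite /q qE /superop /Ukl /= mulmx1 conj_Xpow.
  move=> l l0; rewrite p0 ?scale0r //.
have cT : char_poly (Tmap p) = \prod_(m < N) ('X - (xi p m)%:P).
  rewrite /Tmap (@char_T R N N0 nu nuN nu1); apply: eq_bigr => i _; by rewrite xiE.
have cP : char_poly (weyl_channel p)
        = \prod_(m < N) \prod_(m' < N) ('X - (lam p m m')%:P).
  rewrite weylE (@char_Phi R N N0 nu nuN nu1); apply: eq_bigr => a _.
  have hlt b : ((a + b) %% N < N)%N by rewrite ltn_mod.
  have hinj : injective (fun b : 'I_N => Ordinal (hlt b)).
    move=> b b' /(congr1 val) /= /eqP; rewrite eqn_modDl !modn_small // => /eqP.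
    exact: val_inj.
  rewrite [RHS](reindex_inj hinj) /=; apply: eq_bigr => b _.
  rewrite lamE xiE; congr ('X - _%:P); apply: eq_bigr => k _.
  by rewrite !exprM (@nu_mod R N nu nuN).
split => //.
- move=> a; rewrite !eigenvalue_root_char cP cT.
  under eq_bigr do under eq_bigr do rewrite lamE.
  by rewrite prodr_const card_ord rootE horner_exp expf_eq0 /= -rootE.
Qed.
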